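(* Let $M$ be a matroid on the ground set $E$ and let $\ell:E\to\mathbb{R}$ be a generic real-valued function. Then: (A) The order $<_\ell$ of $\mathcal{B}(M)$ induced by ordering the $\ell$-weights is a shelling order of the independence complex $\mathcal{I}(M)$. (B) For every basis $B$, the restriction set of $B$ in the shelling order $<_\ell$ is the internally passive set of $B$ with respect to the total order on $E$ induced by $\ell$.
   Context: For a matroid $M$ on finite set $E$, $\mathcal{I}(M)$ is its independence complex and $\mathcal{B}(M)$ its set of bases. For $A\subseteq E$, the $\ell$-weight is $\ell(A)=\sum_{a\in A}\ell(a)$. Generic means $\ell$ takes distinct values on elements of $E$ and distinct weights on distinct bases; $<_\ell$ is defined by $B<_\ell B'$ iff $\ell(B)<\ell(B')$, and the total order on $E$ induced by $\ell$ is $e<e'$ iff $\ell(e)<\ell(e')$. A shelling order of a pure simplicial complex is a total order $F_1<\dots<F_k$ of its facets such that for each $j\ge2$, $\langle F_1,\dots,F_{j-1}\rangle\cap\langle F_j\rangle$ is pure of dimension one less than the complex. For a shelling order, the restriction set $\mathcal{R}(F_j)$ is the unique subset of $F_j$ such that the faces of $\langle F_1,\dots,F_j\rangle$ not in $\langle F_1,\dots,F_{j-1}\rangle$ are exactly the subsets of $F_j$ containing $\mathcal{R}(F_j)$. For a total order $<$ on $E$ and a basis $B$, the internally passive set $IP_<(B)$ is the set of $b\in B$ for which there exists $b'\notin B$ with $b'<b$ and $(B\setminus\{b\})\cup\{b'\}$ a basis. *)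

(* Defs.v *)
From HB Require Import structures.
From mathcomp Require Import all_boot all_order all_algebra.
From mathcomp Require Import reals.
Set Implicit Arguments. Unset Strict Implicit. Unset Printing Implicit Defensive.
Import Order.TTheory GRing.Theory Num.Theory.

Section Matroids.
Variable E : finType.

Definition matroid (I : pred {set E}) : Prop :=
  [/\ I set0,
      (forall A B : {set E}, B \subset A -> I A -> I B) &
      (forall A B : {set E}, I A -> I B -> #|A| < #|B| ->
         exists2 x, x \in B :\: A & I (x |: A))].

Definition basis (I : pred {set E}) (B : {set E}) : bool := maxset I B.

Variable R : realType.

Definition weight (l : E -> R) (A : {set E}) : R := (\sum_(a in A) l a)%R.

Definition generic (I : pred {set E}) (l : E -> R) : Prop :=
  injective l /\
  (forall B B', basis I B -> basis I B' -> B != B' -> weight l B != weight l B').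

Definition weight_order (I : pred {set E}) (l : E -> R) : seq {set E} :=
  sort (fun A B => (weight l A <= weight l B)%R) (enum [pred B | basis I B]).

Definition gen (Fs : seq {set E}) : pred {set E} :=
  fun S => has (fun F : {set E} => S \subset F) Fs.

(* A (nonempty-by-containing-set0) complex K is pure with all facets of
   cardinality n (i.e. pure of dimension n-1). *)
Definition pure_card (K : pred {set E}) (n : nat) : Prop :=
  (forall S, K S -> #|S| <= n) /\
  (forall S, K S -> exists2 T, K T & (S \subset T) && (#|T| == n)).

Definition shelling_order (K : pred {set E}) (s : seq {set E}) : Prop :=
  [/\ uniq s,
      (forall F, (F \in s) = maxset K F) &
      (forall j, 0 < j < size s ->
         pure_card (fun S => gen (take j s) S && (S \subset nth set0 s j))
                   ((\max_(F <- s) #|F|) - 1))].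

(* Rset is the restriction set of the j-th facet (0-indexed) of s:
   the faces of <F_1..F_j> not in <F_1..F_{j-1}> are exactly the subsets of
   F_j containing Rset (such a set is necessarily unique). *)
Definition is_restriction_set (s : seq {set E}) (j : nat) (Rset : {set E}) : Prop :=
  Rset \subset nth set0 s j /\
  forall S : {set E},
    (gen (take j.+1 s) S && ~~ gen (take j s) S) =
    (Rset \subset S) && (S \subset nth set0 s j).

Definition int_passive (I : pred {set E}) (l : E -> R) (B : {set E}) : {set E} :=
  [set b in B | [exists b', [&& b' \notin B, (l b' < l b)%R &
                                basis I (b' |: (B :\ b))]]].

End Matroids.

(* Main.v *)
Set Warnings "-notation-overridden,-ambiguous-paths,-notation-incompatible-prefix".
Require Import Defs.
From HB Require Import structures.
From mathcomp Require Import all_boot all_order all_algebra.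
From mathcomp Require Import reals.
Set Implicit Arguments. Unset Strict Implicit. Unset Printing Implicit Defensive.
Import Order.TTheory GRing.Theory Num.Theory.

Lemma indep_le_basis (E : finType) (I : pred {set E}) (A B : {set E}) :
  matroid I -> basis I B -> I A -> #|A| <= #|B|.
Proof.
move=> [_ _ aug] /maxsetP [IB maxB] IA; rewrite leqNgt; apply/negP=> lt.
have [x /setDP [xA xB] Ix] := aug _ _ IB IA lt.
have := maxB _ Ix (subsetUr _ _).
move/setP/(_ x); rewrite !inE eqxx /= => h; by rewrite -h in xB.
Qed.

Lemma card_basis (E : finType) (I : pred {set E}) (A B : {set E}) :
  matroid I -> basis I A -> basis I B -> #|A| = #|B|.
Proof.
move=> M bA bB; apply/eqP; rewrite eqn_leq.
rewrite (indep_le_basis M bB) ?(indep_le_basis M bA) //.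
- by move/maxsetP: bB => [].
- by move/maxsetP: bA => [].
Qed.

Lemma basis_of_card (E : finType) (I : pred {set E}) (A B : {set E}) :
  matroid I -> basis I B -> I A -> #|A| = #|B| -> basis I A.
Proof.
move=> M bB IA cA; apply/maxsetP; split=> // C IC AC.
apply/eqP; rewrite eq_sym eqEcard AC /= cA.
exact: indep_le_basis M bB IC.
Qed.

Lemma extend_indep (E : finType) (I : pred {set E}) (n : nat) (A B : {set E}) :
  matroid I -> I A -> I B -> #|A| <= #|B| -> #|B| - #|A| = n ->
  exists A' : {set E}, [/\ A \subset A', A' \subset A :|: B, I A' & #|A'| = #|B|].
Proof.
move=> M; elim: n A => [|n IH] A IA IB le d.
  exists A; split=> //; first exact: subsetUl.
  by apply/eqP; rewrite eqn_leq le /= -subn_eq0 d.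
have lt : #|A| < #|B| by rewrite -subn_gt0 d.
have [_ _ aug] := M.
have [x /setDP [xB xA] Ix] := aug _ _ IA IB lt.
have cx : #|x |: A| = #|A|.+1 by rewrite cardsU1 xA.
have [||A' [s1 s2 s3 s4]] := IH _ Ix IB; rewrite ?cx ?subnS ?d //.
exists A'; split=> //.
- exact: subset_trans (subsetUr _ _) s1.
- apply: subset_trans s2 _; apply/subsetP=> y; rewrite !inE.
  by case/orP=> [/orP[/eqP->|->]|->]; rewrite ?xB ?orbT.
Qed.

Lemma basis_indep (E : finType) (I : pred {set E}) B : basis I B -> I B.
Proof. by case/maxsetP. Qed.

Lemma exch (E : finType) (I : pred {set E}) (B B' : {set E}) e :
  matroid I -> basis I B -> basis I B' -> e \in B' -> e \notin B ->
  exists2 f, (f \in B) && (f \notin B') & basis I (e |: (B :\ f)).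
Proof.
move=> M bB bB' eB' eB; have M' := M; case: M' => [_ her _].
set A := e |: (B :&: B').
have AB' : A \subset B'.
  apply/subsetP=> y; rewrite !inE; case/orP=> [/eqP->//|/andP[]//].
have IA : I A := her _ _ AB' (basis_indep bB').
have le := indep_le_basis M bB IA.
have [A' [s1 s2 s3 s4]] := extend_indep M IA (basis_indep bB) le (erefl _).
have AeB : A :|: B \subset e |: B.
  apply/subsetP=> y; rewrite !inE => /orP[/orP[->//|/andP[-> _]]|->]; by rewrite orbT.
have ceB : #|e |: B| = #|B|.+1 by rewrite cardsU1 eB.
have : ~~ (e |: B \subset A').
  apply/negP=> /subset_leq_card; by rewrite ceB s4 ltnn.
case/subsetPn=> f feB fA'.
have eA' : e \in A' by apply: (subsetP s1); rewrite !inE eqxx.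
have fe : f != e by apply: contraNneq fA' => ->.
have fB : f \in B by move: feB; rewrite !inE (negbTE fe).
have fB' : f \notin B'.
  apply/negP=> fB'; move/negP: fA'; apply; apply: (subsetP s1); by rewrite !inE fB fB' orbT.
exists f; first by rewrite fB.
have eq : A' = e |: (B :\ f).
  apply/eqP; rewrite eqEcard; apply/andP; split.
    apply/subsetP=> y yA'; have := subsetP AeB y (subsetP s2 y yA').
    rewrite !inE => /orP[->//|yB]; rewrite yB andbT; apply/orP; right.
    by apply/eqP=> yf; rewrite -yf yA' in fA'.
  by rewrite cardsU1 s4 (cardsD1 f B) fB !inE (negbTE eB) andbF.
rewrite -eq; apply: basis_of_card M bB s3 s4.
Qed.

From mathcomp Require Import ring lra.

Lemma weight_exch (E : finType) (R : realType) (l : E -> R) (B : {set E}) e f :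
  e \notin B -> f \in B -> weight l (e |: (B :\ f)) = (weight l B - l f + l e)%R.
Proof.
move=> eB fB; rewrite /weight big_setU1 ?(big_setD1 f fB) /=; last first.
  by rewrite !inE (negbTE eB) andbF.
ring.
Qed.

Lemma key_step (E : finType) (I : pred {set E}) (R : realType) (l : E -> R)
    (B S B' : {set E}) :
  matroid I -> injective l -> basis I B -> S \subset B -> basis I B' -> S \subset B' ->
  (weight l B' < weight l B)%R ->
  (exists b b', [/\ b \in B, b \notin S, b' \notin B, basis I (b' |: (B :\ b)) & (l b' < l b)%R])
  \/ (exists B'', [/\ basis I B'', S \subset B'', (weight l B'' < weight l B')%R &
                     #|B :\: B''| < #|B :\: B'|]).
Proof.
move=> M inj bB SB bB' SB' wlt.
set D := (B :\: B') :|: (B' :\: B).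
have : D != set0.
  apply/negP=> /eqP D0; suff BB : B = B' by rewrite BB ltxx in wlt.
  apply/setP=> x; apply/idP/idP=> xin; apply/negPn/negP=> xn.
    by have := in_set0 x; rewrite -D0 !inE xin xn.
  by have := in_set0 x; rewrite -D0 !inE xin xn orbT.
case/set0Pn=> x0 x0D.
case: (arg_minP l x0D) => e eD0 emin.
have eD : e \in D := eD0.
have lte : forall x, x \in D -> x != e -> (l e < l x)%R.
  move=> x xD xe; rewrite lt_neqAle emin // andbT.
  by apply/negP=> /eqP /inj ex; rewrite ex eqxx in xe.
case eB': (e \in B').
  have eB : e \notin B by move: eD; rewrite /D !inE eB' /= ?andbT ?andbF ?orbF.
  have [f /andP[fB fB'] bx] := exch M bB bB' eB' eB.
  left; exists f, e; split=> //.
    by apply/negP=> /(subsetP SB') fB''; rewrite fB'' in fB'.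
  apply: lte; first by rewrite /D !inE fB fB' ?orbT.
  by apply: contraNneq eB => <-.
have eB : e \in B by move: eD; rewrite /D !inE eB' /= ?andbT ?andbF ?orbF.
have [f /andP[fB' fB] bx] := exch M bB' bB eB (negbT eB').
have lef : (l e < l f)%R.
  apply: lte; first by rewrite /D !inE fB fB' ?orbT.
  by apply: contraNneq fB => ->.
right; exists (e |: (B' :\ f)); split=> //.
- apply/subsetP=> x xS; rewrite !inE (subsetP SB' x xS) andbT; apply/orP; right.
  by apply/negP=> /eqP xf; rewrite -xf (subsetP SB x xS) in fB.
- rewrite weight_exch ?eB' //; lra.
- have eD' : e \in B :\: B' by rewrite !inE eB' eB.
  rewrite (cardsD1 e (B :\: B')) eD' add1n ltnS; apply: subset_leq_card.
  apply/subsetP=> x; rewrite !inE negb_or negb_and negbK => /andP[/andP[xe xf] xB].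
  rewrite xB xe /= andbT; move: xf => /orP[/eqP xf|//].
  by rewrite -xf xB in fB.
Qed.

Lemma improve (E : finType) (I : pred {set E}) (R : realType) (l : E -> R)
    (B S B' : {set E}) :
  matroid I -> injective l -> basis I B -> S \subset B -> basis I B' -> S \subset B' ->
  (weight l B' < weight l B)%R ->
  exists b b', [/\ b \in B, b \notin S, b' \notin B, basis I (b' |: (B :\ b)) & (l b' < l b)%R].
Proof.
move=> M inj bB SB; move: B'.
suff H : forall n B', basis I B' -> S \subset B' -> #|B :\: B'| < n ->
    (weight l B' < weight l B)%R ->
    exists b b', [/\ b \in B, b \notin S, b' \notin B, basis I (b' |: (B :\ b)) & (l b' < l b)%R].
  by move=> B' bB' SB' wlt; apply: (H #|B :\: B'|.+1 B').
elim=> [//|n IH] B' bB' SB' cn wlt.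
have [//|[B'' [bB'' SB'' w'' c'']]] := key_step M inj bB SB bB' SB' wlt.
apply: (IH B'') => //; first exact: leq_trans c'' _.
exact: lt_trans w'' wlt.
Qed.

Lemma K1 (E : finType) (I : pred {set E}) (R : realType) (l : E -> R)
    (B S X : {set E}) :
  matroid I -> injective l -> basis I B -> S \subset B -> basis I X -> S \subset X ->
  (weight l X < weight l B)%R ->
  exists2 b, b \in int_passive I l B & b \notin S.
Proof.
move=> M inj bB SB bX SX wlt.
have [b [b' [bB0 bS b'B bx lt]]] := improve M inj bB SB bX SX wlt.
exists b => //; rewrite inE bB0 /=; apply/existsP; exists b'; by rewrite b'B lt bx.
Qed.

Lemma K2 (E : finType) (I : pred {set E}) (R : realType) (l : E -> R)
    (B S : {set E}) b :
  basis I B -> S \subset B -> b \in int_passive I l B -> b \notin S ->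
  exists2 X, basis I X & (S \subset X) && (weight l X < weight l B)%R.
Proof.
move=> bB SB; rewrite inE => /andP[bB' /existsP[b' /and3P[b'B lt bx]]] bS.
exists (b' |: (B :\ b)) => //; apply/andP; split.
  apply/subsetP=> x xS; rewrite !inE (subsetP SB x xS) andbT; apply/orP; right.
  by apply: contraNneq bS => <-.
rewrite weight_exch //; lra.
Qed.

Lemma mem_wo (E : finType) (I : pred {set E}) (R : realType) (l : E -> R) F :
  (F \in weight_order I l) = basis I F.
Proof. by rewrite /weight_order mem_sort mem_enum inE. Qed.

Lemma uniq_wo (E : finType) (I : pred {set E}) (R : realType) (l : E -> R) :
  uniq (weight_order I l).
Proof. by rewrite /weight_order sort_uniq enum_uniq. Qed.

Lemma wo_lt (E : finType) (I : pred {set E}) (R : realType) (l : E -> R) i j :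
  generic I l -> i < j -> j < size (weight_order I l) ->
  (weight l (nth set0 (weight_order I l) i) < weight l (nth set0 (weight_order I l) j))%R.
Proof.
move=> [inj gen] ij js; set s := weight_order I l.
have is_ : i < size s by apply: ltn_trans ij js.
have so : sorted (fun A B => (weight l A <= weight l B)%R) s.
  by apply: sort_sorted => A B; apply: le_total.
have le := sorted_ltn_nth (fun A B C h1 h2 => le_trans h1 h2) set0 so.
rewrite lt_neqAle le ?inE // andbT; apply: gen.
- by rewrite -(mem_wo I l) mem_nth.
- by rewrite -(mem_wo I l) mem_nth.
- by rewrite nth_uniq ?uniq_wo // neq_ltn ij.
Qed.

Lemma in_take_wo (E : finType) (I : pred {set E}) (R : realType) (l : E -> R) j X :
  generic I l -> j < size (weight_order I l) -> basis I X ->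
  (X \in take j (weight_order I l)) = (weight l X < weight l (nth set0 (weight_order I l) j))%R.
Proof.
move=> G js bX; set s := weight_order I l.
apply/idP/idP.
  case/(nthP set0)=> i; rewrite size_take js => ij <-.
  by rewrite nth_take // wo_lt.
move=> lt.
have Xs : X \in s by rewrite mem_wo.
have iX := nth_index set0 Xs.
case: (ltnP (index X s) j) => ij.
  rewrite -iX -(nth_take set0 ij) mem_nth // size_take js //.
move: ij; rewrite leq_eqVlt => /orP[/eqP ij|ij].
  by move: lt; rewrite -iX -ij ltxx.
have := wo_lt G ij; rewrite index_mem Xs iX => /(_ isT) h.
by move: (lt_trans h lt); rewrite ltxx.
Qed.

Lemma gen_take_wo (E : finType) (I : pred {set E}) (R : realType) (l : E -> R) j (S : {set E}) :
  generic I l -> j < size (weight_order I l) ->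
  reflect (exists2 X, basis I X & (S \subset X) &&
              (weight l X < weight l (nth set0 (weight_order I l) j))%R)
          (gen (take j (weight_order I l)) S).
Proof.
move=> G js; apply: (iffP hasP).
  case=> X Xt SX; have bX : basis I X by rewrite -(mem_wo I l) (mem_take Xt).
  by exists X => //; rewrite SX -in_take_wo.
case=> X bX /andP[SX lt]; exists X => //; by rewrite in_take_wo.
Qed.

From mathcomp Require Import zify.

Theorem theorem1p2 (E : finType) (I : pred {set E}) (R : realType) (l : E -> R) :
  matroid I -> generic I l ->
  shelling_order I (weight_order I l) /\
  (forall j, j < size (weight_order I l) ->
     is_restriction_set (weight_order I l) j
       (int_passive I l (nth set0 (weight_order I l) j))).
Proof.
move=> M G; have [inj _] := G.
have bnth : forall j, j < size (weight_order I l) -> basis I (nth set0 (weight_order I l) j).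
  by move=> j js; rewrite -(mem_wo I l) mem_nth.
have IPsub : forall B, int_passive I l B \subset B.
  by move=> B; apply/subsetP=> x; rewrite inE => /andP[].
have key : forall j (S : {set E}), j < size (weight_order I l) ->
    S \subset nth set0 (weight_order I l) j ->
    (gen (take j (weight_order I l)) S) = ~~ (int_passive I l (nth set0 (weight_order I l) j) \subset S).
  move=> j S js SF; have bF := bnth j js.
  apply/idP/idP.
    case/(gen_take_wo _ G js)=> X bX /andP[SX lt].
    have [b bIP bS] := K1 M inj bF SF bX SX lt.
    by apply/subsetPn; exists b.
  case/subsetPn=> b bIP bS.
  have [X bX h] := K2 bF SF bIP bS.
  by apply/(gen_take_wo _ G js); exists X.
split; last first.
  move=> j js; split; first exact: IPsub.
  move=> S; rewrite /gen (take_nth set0 js) has_rcons -/(gen _ S).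
  case SF: (S \subset nth set0 (weight_order I l) j); last by rewrite /= andbN andbF.
  by rewrite /= key // negbK andbT.
split; [exact: uniq_wo | by move=> F; rewrite mem_wo |].
move=> j /andP[j0 js].
set F := nth set0 (weight_order I l) j.
have bF : basis I F := bnth j js.
have mx : \max_(F0 <- weight_order I l) #|F0| = #|F|.
  apply/eqP; rewrite eqn_leq; apply/andP; split.
    apply/bigmax_leqP_seq => F0 F0s _.
    by rewrite (card_basis M _ bF) // -(mem_wo I l).
  by apply: (leq_bigmax_seq (F:=fun F0 : {set E} => #|F0|) F) => //; rewrite mem_nth.
rewrite mx; split.
  move=> S /andP[g SF].
  case/(gen_take_wo _ G js): g => X bX /andP[SX lt].
  have le : #|S| <= #|F| by apply: subset_leq_card.
  have ne : #|S| != #|F|.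
    apply/negP=> /eqP e.
    have SFe : S = F by apply/eqP; rewrite eqEcard SF e leqnn.
    have SXe : S = X.
      by apply/eqP; rewrite eqEcard SX (card_basis M bX bF) e leqnn.
    by move: lt; rewrite -SXe SFe ltxx.
  lia.
move=> S /andP[g SF].
case/(gen_take_wo _ G js): (g) => X bX /andP[SX lt].
have [b bIP bS] := K1 M inj bF SF bX SX lt.
have bFb : b \in F := subsetP (IPsub F) b bIP.
exists (F :\ b).
  have TF : F :\ b \subset F by apply: subsetDl.
  rewrite TF andbT key //; apply/subsetPn; exists b => //.
  by rewrite !inE eqxx.
apply/andP; split.
  apply/subsetP=> x xS; rewrite !inE (subsetP SF x xS) andbT.
  by apply: contraNneq bS => <-.
by rewrite (cardsD1 b F) bFb add1n subSS subn0.
Qed.
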